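(* If a spanned map $(M,S)$ is a covered map, then the dual spanned map $(M^*,\bar S)$ is also a covered map, and $$g(M)=g(M_{|S})+g(M^*_{|\bar S}).$$
   Context: Permutations compose right to left. A map is $M=(H,\sigma,\alpha)$ with $H$ finite, $\alpha$ a fixed-point-free involution, $\sigma$ a permutation, $\langle\sigma,\alpha\rangle$ transitive, and a root $r\in H$. Vertices, edges, faces are the cycles of $\sigma,\alpha,\phi=\sigma\alpha$; the genus $g$ satisfies $v-e+f=2-2g$. For a permutation $\pi$ and $S\subseteq H$, $\pi_{|S}$ is obtained from the cycles of $\pi$ by erasing elements not in $S$. A spanned map is $(M,S)$ with $S$ stable by $\alpha$, and $M_{|S}=(S,\sigma_{|S},\alpha_{|S})$. The dual of $M$ is $M^*=(H,\phi,\alpha)$ with the same root, and the dual of $(M,S)$ is $(M^*,\bar S)$ with $\bar S=H\setminus S$, so $M^*_{|\bar S}=(\bar S,\phi_{|\bar S},\alpha_{|\bar S})$. A covered map is a spanned map such that $M_{|S}$ is a connecting unicellular map: $\sigma_{|S},\alpha_{|S}$ transitive on $S$, $S$ meets every cycle of $\sigma$ (except $S=\emptyset$ is allowed when $\sigma$ has one cycle; the empty map counts as a unicellular map of genus $0$), and $\sigma_{|S}\alpha_{|S}$ is cyclic. *)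

(* Defs.v *)
From mathcomp Require Import all_boot all_order all_fingroup all_algebra.
Set Implicit Arguments. Unset Strict Implicit. Unset Printing Implicit Defensive.
Import GRing.Theory.

Section Maps.
Variable H : finType.

(* pi_{|S}: for x in S, the first iterate pi^k(x), k >= 1, lying in S;
   identity outside S (only its values on S matter). *)
Definition restr (pi : H -> H) (S : {set H}) (x : H) : H :=
  if x \in S then
    iter (find (fun k => iter k.+1 pi x \in S) (iota 0 #|H|)).+1 pi x
  else x.

Definition ncycles (f : H -> H) (D : {set H}) : nat :=
  #|[set [set y | fconnect f x y] | x in D]|.

Definition transitive_on (s a : H -> H) (D : {set H}) : Prop :=
  forall x y, x \in D -> y \in D ->
    connect [rel u v | (v == s u) || (v == a u)] x y.

(* genus of the (possibly empty) map (D, s, a), from v - e + f = 2 - 2g;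
   the empty map has genus 0 by convention *)
Definition genus_on (D : {set H}) (s a : H -> H) : int :=
  if D == set0 then 0%R else
  ((2%:Z - (ncycles s D)%:Z + (ncycles a D)%:Z
     - (ncycles (s \o a) D)%:Z) %/ 2)%Z.

(* M = (H, sigma, alpha) is a map (the root plays no role here) *)
Definition is_map (sigma alpha : {perm H}) : Prop :=
  [/\ forall x, alpha (alpha x) = x, forall x, alpha x != x
    & transitive_on sigma alpha setT].

Definition genus (sigma alpha : {perm H}) : int :=
  genus_on setT sigma alpha.

(* phi = sigma alpha (right to left): phi x = sigma (alpha x) *)
Definition face_perm (sigma alpha : {perm H}) : {perm H} := (alpha * sigma)%g.

Definition alpha_stable (alpha : {perm H}) (S : {set H}) : Prop :=
  forall x, (alpha x \in S) = (x \in S).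

Definition genus_restr (sigma alpha : {perm H}) (S : {set H}) : int :=
  genus_on S (restr sigma S) (restr alpha S).

Definition covered (sigma alpha : {perm H}) (S : {set H}) : Prop :=
  (S = set0 /\ ncycles sigma setT = 1%N) \/
  [/\ S != set0,
      transitive_on (restr sigma S) (restr alpha S) S,
      (forall x, exists2 y, y \in S & fconnect sigma x y)
    & ncycles (restr sigma S \o restr alpha S) S = 1%N].

End Maps.

(* Main.v *)
Require Import Defs.
From mathcomp Require Import all_boot all_order all_fingroup all_algebra zify.
Set Implicit Arguments. Unset Strict Implicit. Unset Printing Implicit Defensive.

Section Restr.
Variable H : finType.
Implicit Types (f g : H -> H) (S D : {set H}).

Lemma fconnect_iterP f x y : fconnect f x y -> exists n, y = iter n f x.
Proof. by move=> /iter_findex <-; eexists. Qed.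

Lemma restr_ex f S x k0 : x \in S -> k0 < #|H| -> iter k0.+1 f x \in S ->
  exists k, [/\ k < #|H|, restr f S x = iter k.+1 f x, iter k.+1 f x \in S
             & forall j, j < k -> iter j.+1 f x \notin S].
Proof.
move=> xS lk0 ik0.
set P := (fun k => iter k.+1 f x \in S).
have hasP : has P (iota 0 #|H|).
  by apply/hasP; exists k0 => //; rewrite mem_iota.
have lt := hasP; rewrite has_find size_iota in lt.
exists (find P (iota 0 #|H|)); split => //.
- by rewrite /restr xS.
- by have := nth_find 0 hasP; rewrite nth_iota.
- move=> j ltj; have := before_find 0 ltj; rewrite nth_iota ?(ltn_trans ltj) //.
  by rewrite /P => ->.
Qed.

Lemma restr_uniq f S x k : x \in S -> k < #|H| -> iter k.+1 f x \in S ->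
  (forall j, j < k -> iter j.+1 f x \notin S) -> restr f S x = iter k.+1 f x.
Proof.
move=> xS lk ik hj.
have [k' [lk' -> ik' hj']] := restr_ex xS lk ik.
case: (ltngtP k k') => [lkk|lkk|-> //].
- by move: (hj' _ lkk); rewrite ik.
- by move: (hj _ lkk); rewrite ik'.
Qed.

Lemma card_gt0_of (x : H) : 0 < #|H|.
Proof. by apply: leq_trans (max_card (pred1 x)); rewrite card1. Qed.

Lemma restr_perm_ex (p : {perm H}) S x : x \in S ->
  exists k, [/\ k < #|H|, restr p S x = iter k.+1 p x, iter k.+1 p x \in S
             & forall j, j < k -> iter j.+1 p x \notin S].
Proof.
move=> xS; apply: (@restr_ex _ _ _ (fingraph.order p x).-1) => //.
- by rewrite prednK ?order_gt0 //; apply: max_card.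

- by rewrite prednK ?order_gt0 // iter_order //; apply: perm_inj.
Qed.

Lemma restr_in (p : {perm H}) S x : x \in S -> restr p S x \in S.
Proof. by move=> xS; have [k [_ -> ? _]] := restr_perm_ex p xS. Qed.

Lemma restr_out f S x : x \notin S -> restr f S x = x.
Proof. by rewrite /restr => /negbTE ->. Qed.

Lemma restr_orbit (p : {perm H}) S x : x \in S ->
  [set y | fconnect (restr p S) x y] = [set y | fconnect p x y] :&: S.
Proof.
move=> xS; apply/setP => y; rewrite !inE; apply/idP/idP.
- move=> /fconnect_iterP [n ->]; elim: n => [|n /andP [IH1 IH2]]; first by rewrite connect0.
  rewrite iterS; have [k [_ -> ik _]] := restr_perm_ex p IH2.
  by rewrite ik andbT (connect_trans IH1) // fconnect_iter.
- case/andP => /fconnect_iterP [n ->]; elim: n {-2}n (leqnn n) x xS => [|m IH] n.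
    by rewrite leqn0 => /eqP -> x0 _ _; apply: connect0.
  case: n => [_ x0 _ _|n]; first by apply: connect0.
  rewrite ltnS => lnm x0 x0S inS.
  have [k [_ rx ik hj]] := restr_perm_ex p x0S.
  have lkn : k <= n by rewrite leqNgt; apply/negP => /hj; rewrite inS.
  have -> : iter n.+1 p x0 = iter (n - k) p (restr p S x0).
    by rewrite rx -iterD addnS subnK.
  apply: connect_trans (fconnect1 _ _) _.
  apply: IH; first by rewrite (leq_trans (leq_subr _ _)).
    by rewrite rx.
  by rewrite rx -iterD addnS subnK.
Qed.

Lemma orbit_eq (p : {perm H}) x y : fconnect p x y ->
  [set z | fconnect p x z] = [set z | fconnect p y z].
Proof.
move=> xy; apply/setP => z; rewrite !inE.
apply/idP/idP => h; last exact: connect_trans h.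
by apply: connect_trans h; rewrite fconnect_sym //; apply: perm_inj.
Qed.

Lemma ncycles_restr (p : {perm H}) S : ncycles (restr p S) S = ncycles p S.
Proof.
rewrite /ncycles.
have -> : [set [set y | fconnect (restr p S) x y] | x in S] =
  (fun B => B :&: S) @: [set [set y | fconnect p x y] | x in S].
  by rewrite -imset_comp; apply: eq_in_imset => x xS; rewrite /= restr_orbit.
apply: card_in_imset => _ _ /imsetP [x1 x1S ->] /imsetP [x2 x2S ->] /= E.
apply: orbit_eq; rewrite fconnect_sym; last exact: perm_inj.
have : x1 \in [set y | fconnect p x1 y] :&: S by rewrite !inE connect0.
by rewrite E !inE => /andP [].
Qed.

Lemma ncycles_reach (p : {perm H}) S :
  (forall x, exists2 y, y \in S & fconnect p x y) -> ncycles p S = ncycles p setT.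
Proof.
move=> hr; rewrite /ncycles.
suff -> : [set [set y | fconnect p x y] | x in S] = [set [set y | fconnect p x y] | x in setT] by [].
apply/setP => B; apply/imsetP/imsetP.
  by move=> [x _ ->]; exists x.
move=> [x _ ->]; have [y yS xy] := hr x; exists y => //; exact: orbit_eq.
Qed.

Lemma ncycles_eq f g D : f =1 g -> ncycles f D = ncycles g D.
Proof.
move=> fg; rewrite /ncycles.
suff -> : [set [set y | fconnect f x y] | x in D] = [set [set y | fconnect g x y] | x in D] by [].
apply: eq_imset => x.
by apply/setP => y; rewrite !inE (eq_fconnect fg).
Qed.

Lemma fconnect_in f g D x y : {in D, f =1 g} -> {in D, forall z, f z \in D} ->
  x \in D -> fconnect f x y = fconnect g x y.
Proof.
move=> fg fD xD.
have it : forall n, iter n f x = iter n g x /\ iter n f x \in D.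
  elim=> [|n [IH1 IH2]] //=; rewrite -IH1; split; first by rewrite fg.
  exact: fD.
apply/idP/idP => /fconnect_iterP [n ->]; first by rewrite (proj1 (it n)) fconnect_iter.
by rewrite -(proj1 (it n)) fconnect_iter.
Qed.

Lemma ncycles_in f g D : {in D, f =1 g} -> {in D, forall z, f z \in D} ->
  ncycles f D = ncycles g D.
Proof.
move=> fg fD; rewrite /ncycles.
suff -> : [set [set y | fconnect f x y] | x in D] = [set [set y | fconnect g x y] | x in D] by [].
apply: eq_in_imset => x xD.
by apply/setP => y; rewrite !inE (fconnect_in y fg fD xD).
Qed.

Lemma ncycles_fix f D : {in D, forall z, f z = z} -> ncycles f D = #|D|.
Proof.
move=> fD; rewrite /ncycles -[RHS](card_in_imset (f := fun x => [set x])).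
  suff -> : [set [set y | fconnect f x y] | x in D] = [set [set x] | x in D] by [].
  apply: eq_in_imset => x xD; apply/setP => y; rewrite !inE.
  apply/idP/idP => [/fconnect_iterP [n ->]|/eqP ->]; last exact: connect0.
  by elim: n => //= n /eqP ->; rewrite fD.
by move=> x y _ _; apply: set1_inj.
Qed.

Lemma ncycles1 f D x y : ncycles f D = 1%N -> x \in D -> y \in D -> fconnect f x y.
Proof.
move=> /eqP /cards1P [B hB] xD yD.
have hx : [set z | fconnect f x z] \in [set [set y | fconnect f x y] | x in D].
  exact: imset_f.
have hy : [set z | fconnect f y z] \in [set [set y | fconnect f x y] | x in D].
  exact: imset_f.
rewrite hB !inE in hx hy.
have : y \in [set z | fconnect f y z] by rewrite inE connect0.
by rewrite (eqP hy) -(eqP hx) inE.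
Qed.

Lemma ncycles1_sub f D D' : ncycles f D = 1%N -> D' \subset D -> D' != set0 ->
  ncycles f D' = 1%N.
Proof.
move=> h1 sub ne; apply/eqP; rewrite eqn_leq; apply/andP; split.
  by rewrite -h1 subset_leq_card // imsetS.
by rewrite card_gt0 imset_eq0.
Qed.

Lemma restr_stable f S x : x \in S -> f x \in S -> restr f S x = f x.
Proof.
move=> xS fxS; apply: (@restr_uniq f S x 0) => //; exact: card_gt0_of x.
Qed.

Lemma restr_comp (pi beta : {perm H}) (t : H -> H) S x :
  (forall z, t z = pi (if z \in S then beta z else z)) -> x \in S -> beta x \in S ->
  restr t S x = restr pi S (beta x).
Proof.
move=> ht xS bxS.
have [k [lk -> ik hj]] := restr_perm_ex pi bxS.
have cl : forall j, j <= k -> iter j.+1 t x = iter j.+1 pi (beta x).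
  elim=> [_|j IH ljk]; first by rewrite /= ht xS.
  rewrite iterS IH ?(ltnW ljk) // ht.
  by rewrite (negbTE (hj _ ljk)).
rewrite -cl //; apply: restr_uniq => //; first by rewrite cl.
by move=> j ljk; rewrite cl ?(ltnW ljk) // hj.
Qed.

Lemma reach_t (sg : H -> H) (t : H -> H) S x y :
  (forall z, z \notin S -> t z = sg z) -> fconnect sg x y -> y \in S ->
  exists2 y', y' \in S & fconnect t x y'.
Proof.
move=> ht /fconnect_iterP [n ->]; elim: n x => [|n IH] x.
  by move=> xS; exists x.
rewrite iterSr => hS.
case xS: (x \in S); first by exists x.
have [y' y'S ty'] := IH _ hS; exists y' => //.
apply: connect_trans ty'; rewrite -ht ?xS //; exact: fconnect1.
Qed.

Lemma porbit_fconnect (p : {perm H}) x : porbit p x = [set y | fconnect p x y].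
Proof.
apply/setP => y; rewrite inE; apply/porbitP/idP => [[i ->]|/fconnect_iterP [n ->]].
  by rewrite permX fconnect_iter.
by exists n; rewrite permX.
Qed.

Lemma ncycles_porbits (p : {perm H}) : ncycles p setT = #|porbits p|.
Proof.
rewrite /ncycles /porbits.
suff -> : [set [set y | fconnect p x y] | x in setT] = porbit p @: H by [].
apply/setP => B; apply/imsetP/imsetP => [[x _ ->]|[x _ ->]]; exists x => //;
  by rewrite porbit_fconnect.
Qed.

Lemma ncycles_parity (p q : {perm H}) :
  odd (ncycles (p * q)%g setT) =
  odd #|H| (+) odd (ncycles p setT) (+) odd (ncycles q setT).
Proof.
rewrite !ncycles_porbits; have := odd_permM p q; rewrite /odd_perm.
by case: (odd #|H|); case: (odd #|porbits p|); case: (odd #|porbits q|);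
   case: (odd #|porbits (p * q)%g|).
Qed.

Lemma ncycles_fcard (p : {perm H}) D : fclosed p D -> ncycles p D = fcard p D.
Proof.
move=> clD.
have symp : connect_sym (frel p) by move=> x y; apply: fconnect_sym; apply: perm_inj.
pose R := [set x | froots p x && (x \in D)].
have -> : fcard p D = #|R| by apply: eq_card => x; rewrite !inE.
rewrite /ncycles -[RHS](@card_in_imset _ _ (fun x => [set y | fconnect p x y])).
  suff -> : [set [set y | fconnect p x y] | x in D] =
            [set [set y | fconnect p x y] | x in R] by [].
  apply/setP => B; apply/imsetP/imsetP => [[x xD ->]|[x]]; last first.
    by rewrite inE => /andP [_ xD] ->; exists x.
  exists (froot p x).
    rewrite inE roots_root //= -(closed_connect clD (connect_root _ x)) xD //.
  by apply: orbit_eq; apply: connect_root.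
move=> x1 x2; rewrite !inE => /andP [r1 _] /andP [r2 _] E.
have : x2 \in [set y | fconnect p x1 y] by rewrite E inE connect0.
rewrite inE -(root_connect symp) (eqP r1) (eqP r2) => /eqP.
by [].
Qed.

Lemma stable_closed (p : {perm H}) S : (forall x, (p x \in S) = (x \in S)) ->
  fclosed p S.
Proof. by move=> st x y /= /eqP <-; rewrite st. Qed.

Lemma stableC (p : {perm H}) S : (forall x, (p x \in S) = (x \in S)) ->
  (forall x, (p x \in ~: S) = (x \in ~: S)).
Proof. by move=> st x; rewrite !inE st. Qed.

Lemma ncycles_split (p : {perm H}) S : (forall x, (p x \in S) = (x \in S)) ->
  ncycles p setT = (ncycles p S + ncycles p (~: S))%N.
Proof.
move=> st.
rewrite !ncycles_fcard; first last.
- by apply: stable_closed => x; rewrite !inE.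
- exact: stable_closed.
- exact/stable_closed/stableC.
have -> : fcard p [set: H] = fcard p H by apply: eq_n_comp_r => x; rewrite inE.
rewrite (n_compC S); congr (_ + _)%N; apply: eq_n_comp_r => x; rewrite !inE //.
Qed.

Lemma invol_fconnect (b : {perm H}) x y : (forall z, b (b z) = z) ->
  fconnect b x y = (y == x) || (y == b x).
Proof.
move=> bb; apply/idP/idP => [/fconnect_iterP [n ->]|/orP [/eqP ->|/eqP ->]].
- elim: n => [|n]; first by rewrite eqxx.
  by rewrite iterS => /orP [/eqP ->|/eqP ->]; rewrite ?bb eqxx ?orbT.
- exact: connect0.
- exact: fconnect1.
Qed.

Lemma invol_card (b : {perm H}) S : (forall z, b (b z) = z) -> (forall z, b z != z) ->
  (forall x, (b x \in S) = (x \in S)) -> #|S| = (ncycles b S * 2)%N.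
Proof.
move=> bb bn st; rewrite ncycles_fcard; last exact: stable_closed.
symmetry; apply: fcard_order_set; [exact: perm_inj| |exact: stable_closed].
apply/subsetP => x _; rewrite inE /fingraph.order.
rewrite (eq_card (fun y => invol_fconnect x y bb)) .
have := card2 x (b x); rewrite eq_sym bn => <-; apply/eqP/eq_card => y; by rewrite !inE.
Qed.

Lemma rp_ex (b : {perm H}) S : (forall z, b (b z) = z) ->
  (forall x, (b x \in S) = (x \in S)) ->
  {p : {perm H} | forall x, p x = if x \in S then b x else x}.
Proof.
move=> bb st.
have inj : injective (fun x => if x \in S then b x else x).
  move=> x y /=; case xS: (x \in S); case yS: (y \in S) => //.
  - by apply: perm_inj.
  - by move=> E; move: xS; rewrite -st E yS.
  - by move=> E; move: yS; rewrite -st -E xS.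
by exists (perm inj) => x; rewrite permE.
Qed.

End Restr.

Lemma parity_side (H : finType) (pi b bS : {perm H}) (S : {set H}) :
  (forall z, b (b z) = z) -> (forall z, b z != z) ->
  (forall x, (b x \in S) = (x \in S)) ->
  (forall x, bS x = if x \in S then b x else x) ->
  ncycles (bS * pi)%g setT = 1%N ->
  odd (ncycles pi setT) (+) odd (ncycles b S) = true.
Proof.
move=> bb bn st hbS h1.
have := ncycles_parity bS pi; rewrite h1.
have stS : forall x, (bS x \in S) = (x \in S).
  by move=> x; rewrite hbS; case xS: (x \in S); rewrite ?st ?xS.
rewrite (ncycles_split stS).
have -> : ncycles bS S = ncycles b S.
  apply: ncycles_in => x xS; first by rewrite hbS xS.
  by rewrite stS.
have -> : ncycles bS (~: S) = #|~: S|.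
  by apply: ncycles_fix => x; rewrite inE hbS => /negbTE ->.
rewrite -(cardsC S) (invol_card bb bn st) !oddD oddM andbF /=.
by case: (odd #|~: S|); case: (odd (ncycles b S)); case: (odd (ncycles pi setT)).
Qed.

Local Open Scope ring_scope.
Lemma arith (V a F b : nat) : odd V (+) odd a -> odd F (+) odd b ->
  divz (2%:Z - V%:Z + (a + b)%N%:Z - F%:Z) 2 =
   divz (2%:Z - V%:Z + a%:Z - 1%N%:Z) 2 + divz (2%:Z - F%:Z + b%:Z - 1%N%:Z) 2.
Proof.
move=> h1 h2.
have [k hk] : exists k, (V + a = k * 2 + 1)%N.
  by exists (V + a)./2; rewrite -[in LHS](odd_double_half (V + a)) oddD h1 -muln2; lia.
have [l hl] : exists l, (F + b = l * 2 + 1)%N.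
  by exists (F + b)./2; rewrite -[in LHS](odd_double_half (F + b)) oddD h2 -muln2; lia.
have e1 : (2%:Z - V%:Z + a%:Z - 1%N%:Z = (k%:Z + 1 - V%:Z) * 2) by lia.
have e2 : (2%:Z - F%:Z + b%:Z - 1%N%:Z = (l%:Z + 1 - F%:Z) * 2) by lia.
have e3 : (2%:Z - V%:Z + (a + b)%N%:Z - F%:Z = ((k%:Z + 1 - V%:Z) + (l%:Z + 1 - F%:Z)) * 2) by lia.
by rewrite e1 e2 e3 !mulzK.
Qed.
Local Close Scope ring_scope.


Theorem mainTheorem7 (H : finType) (sigma alpha : {perm H}) (S : {set H}) :
  is_map sigma alpha -> alpha_stable alpha S -> covered sigma alpha S ->
  covered (face_perm sigma alpha) alpha (~: S) /\
  genus sigma alpha =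
    (genus_restr sigma alpha S + genus_restr (face_perm sigma alpha) alpha (~: S))%R.
Proof.
move=> [aa an tr] st cov.
set phi := face_perm sigma alpha.
have phiE : forall x, phi x = sigma (alpha x) by move=> x; rewrite /phi /face_perm permM.
have sigE : forall x, sigma x = phi (alpha x) by move=> x; rewrite phiE aa.
have FE : ncycles (sigma \o alpha) setT = ncycles phi setT.
  by apply: ncycles_eq => x; rewrite phiE.
case: cov => [[S0 v1] | [Sn trS reachS f1]].
  subst S.
  have [x0 _] : exists x : H, true.
    move/eqP/cards1P: v1 => [B hB].
    have : B \in [set B] by rewrite inE.
    by rewrite -hB => /imsetP [x _ _]; exists x.
  have rT : forall (f : H -> H) x, restr f setT x = f x.
    by move=> f x; rewrite restr_stable ?inE.
  rewrite setC0; split.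
    right; split.
    - by apply/set0Pn; exists x0.
    - move=> x y _ _; have := tr x y (in_setT x) (in_setT y).
      apply: connect_sub => u v /= /orP [] /eqP ->.
        apply: (@connect_trans _ _ (alpha u)); apply: connect1.
          by rewrite /= !rT eqxx orbT.
          by rewrite /= !rT -sigE eqxx.
        by apply: connect1; rewrite /= !rT eqxx orbT.
    - by move=> x; exists x; rewrite ?inE ?connect0.
    - by rewrite (ncycles_eq (g := sigma)) // => x; rewrite /= !rT -sigE.
  have T0 : ([set: H] == set0) = false by apply/negbTE/set0Pn; exists x0.
  rewrite /genus_restr /genus /genus_on eqxx T0 GRing.add0r.
  rewrite (ncycles_eq (f := restr phi setT) (g := phi)) //.
  rewrite (ncycles_eq (f := restr alpha setT) (g := alpha)) //.
  rewrite (ncycles_eq (f := restr phi setT \o restr alpha setT) (g := sigma)); last first.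
    by move=> x; rewrite /= !rT -sigE.
  rewrite FE; congr (divz _ _); lia.
have [aS haS] := rp_ex aa st.
have stC : forall x, (alpha x \in ~: S) = (x \in ~: S) by move=> x; rewrite !inE st.
have [aSb haSb] := rp_ex aa stC.
set th := (aS * sigma)%g.
have thE : forall x, th x = sigma (if x \in S then alpha x else x).
  by move=> x; rewrite permM haS.
have th2 : forall x, (aSb * phi)%g x = th x.
  move=> x; rewrite permM haSb thE phiE !inE.
  by case: (x \in S); rewrite ?aa.
have thE2 : forall x, th x = phi (if x \in ~: S then alpha x else x).
  by move=> x; rewrite -th2 permM haSb.
have h1 : {in S, (restr sigma S \o restr alpha S) =1 restr th S}.
  move=> x xS /=; rewrite (restr_stable xS) ?st //.
  by rewrite (restr_comp thE xS) ?st.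
have h2 : {in ~: S, (restr phi (~: S) \o restr alpha (~: S)) =1 restr th (~: S)}.
  move=> x xS /=; rewrite (restr_stable xS) ?stC //.
  by rewrite (restr_comp thE2 xS) ?stC.
have m1 : {in S, forall z, (restr sigma S \o restr alpha S) z \in S}.
  by move=> z zS /=; apply: restr_in; apply: restr_in.
have m2 : {in ~: S, forall z, (restr phi (~: S) \o restr alpha (~: S)) z \in ~: S}.
  by move=> z zS /=; apply: restr_in; apply: restr_in.
have thS : ncycles (restr th S) S = 1%N by rewrite -(ncycles_in h1 m1).
have threach : forall x, exists2 y, y \in S & fconnect th x y.
  move=> x; have [y yS xy] := reachS x.
  by apply: (reach_t (sg := sigma)) xy yS => z /negbTE zS; rewrite thE zS.
have thT : ncycles th setT = 1%N by rewrite -(ncycles_reach threach) -ncycles_restr.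
have par1 := parity_side aa an st haS thT.
have VS : ncycles (restr sigma S) S = ncycles sigma setT.
  by rewrite ncycles_restr ncycles_reach.
have F1S : ncycles (restr sigma S \o restr alpha S) S = 1%N by [].
have ES : ncycles (restr alpha S) S = ncycles alpha S by rewrite ncycles_restr.
have Esplit := ncycles_split st.
have Sn0 : (S == set0) = false by apply/negbTE.
have T0 : ([set: H] == set0) = false.
  apply/negbTE; apply: contra Sn => /eqP T0; apply/eqP/setP => x.
  by have := in_setT x; rewrite T0 inE.
case Sb0 : (~: S == set0).
  have ST : S = setT by apply/setP => x; have := in_setC x S; rewrite (eqP Sb0) !inE => /esym/negbFE.
  have phiT : ncycles phi setT = 1%N.
    rewrite -thT; apply: ncycles_eq => x; rewrite thE phiE ST inE //.
  split; first by left; split => //; apply/eqP.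
  rewrite /genus_restr /genus /genus_on Sb0 Sn0 T0 GRing.addr0 VS ES F1S FE phiT.
  rewrite Esplit (eqP Sb0).
  have -> : ncycles alpha set0 = 0%N by rewrite /ncycles imset0 cards0.
  by rewrite addn0.
have Sbn : ~: S != set0 by rewrite Sb0.
have thSb : ncycles (restr th (~: S)) (~: S) = 1%N.
  by rewrite ncycles_restr; apply: ncycles1_sub thT (subsetT _) Sbn.
have dreach : forall x, exists2 y, y \in ~: S & fconnect phi x y.
  move=> x; case E: [exists y in ~: S, fconnect phi x y].
    by move/existsP: E => [y /andP [yS xy]]; exists y.
  exfalso.
  have inS : forall w, fconnect phi x w -> w \in S.
    move=> w xw; apply/negPn/negP => wn.
    by move/negbT: E => /existsPn /(_ w); rewrite inE wn xw.
  have [z zS] := set0Pn _ Sbn.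
  have /fconnect_iterP [n zE] := ncycles1 thT (in_setT x) (in_setT z).
  have : fconnect phi x z.
    rewrite zE; elim: n {zE} => [|n IH]; first exact: connect0.
    rewrite iterS thE (inS _ IH) -phiE.
    by apply: connect_trans IH (fconnect1 _ _).
  by move/inS; move: zS; rewrite inE => /negbTE ->.
have VSb : ncycles (restr phi (~: S)) (~: S) = ncycles phi setT.
  by rewrite ncycles_restr ncycles_reach.
have F1Sb : ncycles (restr phi (~: S) \o restr alpha (~: S)) (~: S) = 1%N.
  by rewrite (ncycles_in h2 m2).
have ESb : ncycles (restr alpha (~: S)) (~: S) = ncycles alpha (~: S) by rewrite ncycles_restr.
have par2 : odd (ncycles phi setT) (+) odd (ncycles alpha (~: S)) = true.
  apply: (parity_side aa an stC haSb); rewrite -thT; apply: ncycles_eq => x; exact: th2.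
split.
  right; split => //.
  move=> x y xS yS; have := ncycles1 thSb xS yS.
  apply: connect_sub => u v /= /eqP <-.
  case uS: (u \in ~: S); last by rewrite restr_out ?uS.
  rewrite -h2 //=.
  apply: (@connect_trans _ _ (restr alpha (~: S) u)); apply: connect1.
    by rewrite /= eqxx orbT.
  by rewrite /= eqxx.
rewrite /genus_restr /genus /genus_on Sb0 Sn0 T0 VS ES F1S FE VSb ESb F1Sb Esplit.
exact: arith.
Qed.
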